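(* Consider the coupled circuit DAE \begin{align*} \mathbf{A}_\mathrm{C}\tfrac{\mathrm{d}}{\mathrm{d}t}\mathbf{q}(\mathbf{A}_\mathrm{C}^{\top}\mathbf{e},t)+\mathbf{A}_\mathrm{R}\mathbf{g}(\mathbf{A}_\mathrm{R}^{\top}\mathbf{e},t)+\mathbf{A}_\mathrm{L}\mathbf{i}_\mathrm{L}+\mathbf{A}_\mathrm{V}\mathbf{i}_\mathrm{V}+\mathbf{A}_\lambda\mathbf{i}_\lambda+\mathbf{A}_\mathrm{I}\mathbf{i}_\mathrm{src}(t)&=0,\\ \tfrac{\mathrm{d}}{\mathrm{d}t}\phi_\mathrm{L}(\mathbf{i}_\mathrm{L},t)-\mathbf{A}_\mathrm{L}^{\top}\mathbf{e}&=0,\\ \mathbf{A}_\mathrm{V}^{\top}\mathbf{e}-\mathbf{v}_\mathrm{src}(t)&=0,\\ \mathbf{F}\big(\tfrac{\mathrm{d}}{\mathrm{d}t}\mathbf{x}_\lambda,\tfrac{\mathrm{d}}{\mathrm{d}t}\mathbf{i}_\lambda,\mathbf{x}_\lambda,\mathbf{i}_\lambda,\mathbf{A}_\lambda^{\top}\mathbf{e},t\big)&=0, \end{align*} with incidence matrix $\mathbf{A}=[\mathbf{A}_\mathrm{C}\ \mathbf{A}_\mathrm{R}\ \mathbf{A}_\mathrm{L}\ \mathbf{A}_\mathrm{V}\ \mathbf{A}_\mathrm{I}\ \mathbf{A}_\lambda]$, satisfying $\ker(\mathbf{A}_\mathrm{R}\ \mathbf{A}_\mathrm{C}\ \mathbf{A}_\mathrm{V}\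 \mathbf{A}_\mathrm{L}\ \mathbf{A}_\lambda)^{\top}=\{0\}$, $\ker\mathbf{A}_\mathrm{V}=\{0\}$, with $\partial\mathbf{g}/\partial\mathbf{v}_\mathrm{R}$, $\partial\phi_\mathrm{L}/\partial\mathbf{i}_\mathrm{L}$, $\partial\mathbf{q}/\partial\mathbf{v}_\mathrm{C}$ positive definite, all functions sufficiently smooth, and where $\mathbf{F}$ describes an inductance-like element. Suppose moreover that the element's DAE has the structure $$\mathbf{F}\big(\tfrac{\mathrm{d}}{\mathrm{d}t}\mathbf{x}_\lambda,\tfrac{\mathrm{d}}{\mathrm{d}t}\mathbf{i}_\lambda,\mathbf{x}_\lambda,\mathbf{i}_\lambda,\mathbf{v}_\lambda,t\big)=\tilde{\mathbf{F}}\big(\tfrac{\mathrm{d}}{\mathrm{d}t}\mathbf{x}_\lambda,\tfrac{\mathrm{d}}{\mathrm{d}t}\mathbf{i}_\lambda,\mathbf{x}_\lambda,\mathbf{i}_\lambda,t\big)+\mathbf{B}\mathbf{v}_\lambda$$ with a constant matrix $\mathbf{B}\in\mathbb{R}^{(n_\mathrm{dof}+n_\lambda)\times n_\lambda}$ (the voltage enters linearly). Then, whenever the inductance-like element is contained in a cutset consisting only of inductors, current sources and inductance-like elements (an LI$\lambda$-cutset), the coupled system has linear index-2 components.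
   Context: Inductance-like element: a device described by a DAE $\mathbf{F}(\frac{\mathrm{d}}{\mathrm{d}t}\mathbf{x}_\lambda,\frac{\mathrm{d}}{\mathrm{d}t}\mathbf{i}_\lambda,\mathbf{x}_\lambda,\mathbf{i}_\lambda,\mathbf{v}_\lambda,t)=0$ with $\mathbf{x}_\lambda:\mathcal{I}\to\mathbb{R}^{n_\mathrm{dof}}$, $\mathbf{i}_\lambda,\mathbf{v}_\lambda:\mathcal{I}\to\mathbb{R}^{n_\lambda}$, such that at most one differentiation $\frac{\mathrm{d}}{\mathrm{d}t}\mathbf{F}=0$ is needed to obtain from $\mathbf{F}=0$ and $\frac{\mathrm{d}}{\mathrm{d}t}\mathbf{F}=0$ a system $\frac{\mathrm{d}}{\mathrm{d}t}\mathbf{x}_\lambda=\mathbf{f}_\mathbf{x}(\mathbf{x}_\lambda,\mathbf{i}_\lambda,\mathbf{v}_\lambda,t)$, $\frac{\mathrm{d}}{\mathrm{d}t}\phi(\mathbf{i}_\lambda,\mathbf{x}_\lambda,t)=\mathbf{f}_\phi(\mathbf{x}_\lambda,\mathbf{i}_\lambda,\mathbf{v}_\lambda,t)$, where $\partial\phi/\partial\mathbf{i}_\lambda$ is regular and $\frac{\partial}{\partial\mathbf{v}_\lambda}\Big((\frac{\partial\phi}{\partial\mathbf{i}_\lambda})^{-1}(-\frac{\partial\phi}{\partial\mathbf{x}_\lambda}\mathbf{f}_\mathbf{x}-\frac{\partial\phi}{\partial t}+\mathbf{f}_\phi)\Big)$ is positive definite ($\mathbf{x}^\top\mathbf{M}\mathbf{x}>0$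 for $\mathbf{x}\ne0$). The index-2 components of the coupled system are the node potentials $\mathbf{Q}_\mathrm{CRV}\mathbf{e}$, where $\mathbf{Q}_\mathrm{CRV}$ is a projector onto $\ker(\mathbf{A}_\mathrm{C}\ \mathbf{A}_\mathrm{R}\ \mathbf{A}_\mathrm{V})^\top$, and the currents $\bar{\mathbf{Q}}_\mathrm{V-C}\mathbf{i}_\mathrm{V}$, where $\bar{\mathbf{Q}}_\mathrm{V-C}$ is a projector onto $\ker\mathbf{Q}_\mathrm{C}^\top\mathbf{A}_\mathrm{V}$ and $\mathbf{Q}_\mathrm{C}$ a projector onto $\ker\mathbf{A}_\mathrm{C}^\top$. ''Linear index-2 components'' means these index-2 components enter the system equations only linearly. *)

(* Defs.v *)
From HB Require Import structures.
From mathcomp Require Import all_boot all_order all_algebra.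
From mathcomp Require Import all_classical all_reals all_analysis.
Set Implicit Arguments. Unset Strict Implicit. Unset Printing Implicit Defensive.
Import Order.TTheory GRing.Theory Num.Theory.
Import numFieldNormedType.Exports.
Local Open Scope ring_scope.

Section Defs.
Variable R : realType.

Definition jac (n m : nat) (f : 'cV[R]_n -> 'cV[R]_m) (x : 'cV[R]_n)
  : 'M[R]_(m, n) :=
  \matrix_(i < m, j < n) ('d f x (delta_mx j (0 : 'I_1)) : 'cV[R]_m) i 0.

(* positive definite: x^T M x > 0 for x <> 0 (no symmetry required) *)
Definition posdefmx (n : nat) (M : 'M[R]_n) : Prop :=
  forall y : 'cV[R]_n, y != 0 -> 0 < (y^T *m M *m y) 0 0.

Definition posdef_jac (n : nat) (f : 'cV[R]_n -> 'cV[R]_n) (x : 'cV[R]_n) : Prop :=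
  differentiable f x /\ posdefmx (jac f x).

Definition projector_onto (n : nat) (Q : 'M[R]_n) (P : 'cV[R]_n -> Prop) : Prop :=
  Q *m Q = Q /\ forall y : 'cV[R]_n, (exists z, y = Q *m z) <-> P y.

(* (reduced) incidence matrix block: entries in {-1,0,1}, every column has
   at most one +1 and at most one -1 (the removed ground node carries the rest) *)
Definition incidence_block (n b : nat) (M : 'M[R]_(n, b)) : Prop :=
  forall j : 'I_b,
    (forall i, M i j = 0 \/ M i j = 1 \/ M i j = -1) /\
    (forall i i', M i j = 1 -> M i' j = 1 -> i = i') /\
    (forall i i', M i j = -1 -> M i' j = -1 -> i = i').

Definition inductance_like (ndof nl : nat)
  (F : 'cV[R]_ndof -> 'cV[R]_nl -> 'cV[R]_ndof -> 'cV[R]_nl -> 'cV[R]_nl -> R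
       -> 'cV[R]_(ndof + nl)) : Prop :=
  exists (fx : 'cV[R]_ndof -> 'cV[R]_nl -> 'cV[R]_nl -> R -> 'cV[R]_ndof)
         (fphi : 'cV[R]_ndof -> 'cV[R]_nl -> 'cV[R]_nl -> R -> 'cV[R]_nl)
         (phi : 'cV[R]_nl -> 'cV[R]_ndof -> R -> 'cV[R]_nl),
    (forall i x t, differentiable (fun i' => phi i' x t) i /\
                   differentiable (fun x' => phi i x' t) x /\
                   jac (fun i' => phi i' x t) i \in unitmx) /\
    (forall x i v t,
       posdef_jac (fun v' =>
         invmx (jac (fun i' => phi i' x t) i) *m
           (- (jac (fun x' => phi i x' t) x *m fx x i v' t)
            - derive1 (fun s => phi i x s) t + fphi x i v' t)) v) /\
    (forall (a b : R) (xl : R -> 'cV[R]_ndof) (il vl : R -> 'cV[R]_nl),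
       (forall t, a < t < b ->
          derivable xl t 1 /\ derivable il t 1 /\
          derivable (derive1 xl) t 1 /\ derivable (derive1 il) t 1) ->
       (forall t, a < t < b ->
          F (derive1 xl t) (derive1 il t) (xl t) (il t) (vl t) t = 0) ->
       forall t, a < t < b ->
          derive1 xl t = fx (xl t) (il t) (vl t) t /\
          derive1 (fun s => phi (il s) (xl s) s) t = fphi (xl t) (il t) (vl t) t).

(* Residual of the coupled circuit DAE, evaluated along trajectories
   e, iL, iV, xl, il at time t, stacked into one column vector
   [KCL; inductor eqs; voltage source eqs; element eqs]. *)
Definition circuit_residual (n nC nR nL nV nI nl ndof : nat)
  (AC : 'M[R]_(n, nC)) (AR : 'M[R]_(n, nR)) (AL : 'M[R]_(n, nL))
  (AV : 'M[R]_(n, nV)) (AI : 'M[R]_(n, nI)) (Al : 'M[R]_(n, nl))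
  (q : 'cV[R]_nC -> R -> 'cV[R]_nC) (g : 'cV[R]_nR -> R -> 'cV[R]_nR)
  (phiL : 'cV[R]_nL -> R -> 'cV[R]_nL)
  (isrc : R -> 'cV[R]_nI) (vsrc : R -> 'cV[R]_nV)
  (F : 'cV[R]_ndof -> 'cV[R]_nl -> 'cV[R]_ndof -> 'cV[R]_nl -> 'cV[R]_nl -> R
       -> 'cV[R]_(ndof + nl))
  (e : R -> 'cV[R]_n) (iL : R -> 'cV[R]_nL) (iV : R -> 'cV[R]_nV)
  (xl : R -> 'cV[R]_ndof) (il : R -> 'cV[R]_nl) (t : R)
  : 'cV[R]_(n + (nL + (nV + (ndof + nl)))) :=
  col_mx
    (AC *m derive1 (fun s => q (AC^T *m e s) s) t + AR *m g (AR^T *m e t) t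
     + AL *m iL t + AV *m iV t + Al *m il t + AI *m isrc t)
  (col_mx
    (derive1 (fun s => phiL (iL s) s) t - AL^T *m e t)
  (col_mx
    (AV^T *m e t - vsrc t)
    (F (derive1 xl t) (derive1 il t) (xl t) (il t) (Al^T *m e t) t))).

End Defs.

(* Main.v *)
Require Import Defs.
From HB Require Import structures.
From mathcomp Require Import all_boot all_order all_algebra.
From mathcomp Require Import all_classical all_reals all_analysis.
Import Order.TTheory GRing.Theory Num.Theory.
Import numFieldNormedType.Exports.
Local Open Scope ring_scope.

Lemma addrL1 (V : zmodType) (a b c d f h u : V) :
  a + b + c + d + f + h = a + b + c + (d - u) + f + h + u.
Proof. by rewrite -!addrA; do 4 congr (_ + _); rewrite addrCA; congr (_ + _); rewrite addrCA addNr addr0. Qed.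
Lemma addrL2 (V : zmodType) (c x y : V) : c - x = c - (x - y) + - y.
Proof. by rewrite opprB -addrA [y - x]addrC addrK. Qed.
Lemma addrL3 (V : zmodType) (c x y : V) : c + x = c + (x - y) + y.
Proof. by rewrite -addrA addrNK. Qed.

Theorem proposition1 (R : realType) (n nC nR nL nV nI nl ndof : nat)
  (AC : 'M[R]_(n, nC)) (AR : 'M[R]_(n, nR)) (AL : 'M[R]_(n, nL))
  (AV : 'M[R]_(n, nV)) (AI : 'M[R]_(n, nI)) (Al : 'M[R]_(n, nl))
  (q : 'cV[R]_nC -> R -> 'cV[R]_nC) (g : 'cV[R]_nR -> R -> 'cV[R]_nR)
  (phiL : 'cV[R]_nL -> R -> 'cV[R]_nL)
  (isrc : R -> 'cV[R]_nI) (vsrc : R -> 'cV[R]_nV)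
  (F : 'cV[R]_ndof -> 'cV[R]_nl -> 'cV[R]_ndof -> 'cV[R]_nl -> 'cV[R]_nl -> R
       -> 'cV[R]_(ndof + nl))
  (Ft : 'cV[R]_ndof -> 'cV[R]_nl -> 'cV[R]_ndof -> 'cV[R]_nl -> R
        -> 'cV[R]_(ndof + nl))
  (B : 'M[R]_(ndof + nl, nl))
  (QCRV : 'M[R]_n) (QC : 'M[R]_n) (QVC : 'M[R]_nV) :
  (* A = [AC AR AL AV AI Al] is a (reduced) incidence matrix *)
  incidence_block AC -> incidence_block AR -> incidence_block AL ->
  incidence_block AV -> incidence_block AI -> incidence_block Al ->
  (* ker (AR AC AV AL Al)^T = {0} *)
  (forall y : 'cV[R]_n,
     (row_mx AR (row_mx AC (row_mx AV (row_mx AL Al))))^T *m y = 0 -> y = 0) ->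
  (* ker AV = {0} *)
  (forall y : 'cV[R]_nV, AV *m y = 0 -> y = 0) ->
  (* dg/dvR, dphiL/diL, dq/dvC positive definite *)
  (forall v t, posdef_jac (fun v' => g v' t) v) ->
  (forall i t, posdef_jac (fun i' => phiL i' t) i) ->
  (forall v t, posdef_jac (fun v' => q v' t) v) ->
  (* F describes an inductance-like element *)
  inductance_like F ->
  (* the voltage enters linearly with a constant matrix B *)
  (forall dx di x i v t, F dx di x i v t = Ft dx di x i t + B *m v) ->
  (* the element lies in an LI-lambda cutset: a node set (indicator y of
     non-ground nodes) whose cut contains no C, R, V branch but some
     branch of the element *)
  (exists y : 'cV[R]_n,
     (forall k, y k 0 = 0 \/ y k 0 = 1) /\
     AC^T *m y = 0 /\ AR^T *m y = 0 /\ AV^T *m y = 0 /\ Al^T *m y != 0) ->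
  (* projectors defining the index-2 components *)
  projector_onto QCRV (fun y => (row_mx AC (row_mx AR AV))^T *m y = 0) ->
  projector_onto QC (fun y => AC^T *m y = 0) ->
  projector_onto QVC (fun y => (QC^T *m AV) *m y = 0) ->
  (* conclusion: the index-2 components QCRV e and QVC iV (and their
     derivatives) enter the system equations only linearly *)
  exists (K1 K2 : 'M[R]_(n + (nL + (nV + (ndof + nl))), n + nV)),
    forall (e : R -> 'cV[R]_n) (iL : R -> 'cV[R]_nL) (iV : R -> 'cV[R]_nV)
           (xl : R -> 'cV[R]_ndof) (il : R -> 'cV[R]_nl) (t : R),
      let z := fun s => col_mx (QCRV *m e s) (QVC *m iV s) in
      circuit_residual AC AR AL AV AI Al q g phiL isrc vsrc F e iL iV xl il t =
      circuit_residual AC AR AL AV AI Al q g phiL isrc vsrc F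
        (fun s => (1%:M - QCRV) *m e s) iL (fun s => (1%:M - QVC) *m iV s) xl il t
      + K1 *m derive1 z t + K2 *m z t.
Proof.
move=> _ _ _ _ _ _ _ _ _ _ _ _ HF _ [HPP HP] _ _.
set P := QCRV.
have HPy : forall y : 'cV[R]_n, AC^T *m (P *m y) = 0 /\ AR^T *m (P *m y) = 0 /\ AV^T *m (P *m y) = 0.
  move=> y; have /HP : exists z : 'cV[R]_n, P *m y = P *m z by exists y.
  rewrite !tr_row_mx !mul_col_mx => /eqP; rewrite !col_mx_eq0 => /andP[/eqP -> /andP[/eqP -> /eqP ->]].
  by [].
exists 0, (col_mx (row_mx 0 AV) (col_mx (row_mx (- AL^T) 0)
          (col_mx 0 (row_mx (B *m Al^T) 0)))).
move=> e iL iV xl il t z.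
rewrite mul0mx addr0 /circuit_residual /z.
have E1 : forall s, (1%:M - P) *m e s = e s - P *m e s.
  by move=> s; rewrite mulmxBl mul1mx.
have E2 : forall s, (1%:M - QVC) *m iV s = iV s - QVC *m iV s.
  by move=> s; rewrite mulmxBl mul1mx.
have EC : forall s, AC^T *m ((1%:M - P) *m e s) = AC^T *m e s.
  by move=> s; rewrite E1 mulmxBr (HPy (e s)).1 subr0.
have ER : forall s, AR^T *m ((1%:M - P) *m e s) = AR^T *m e s.
  by move=> s; rewrite E1 mulmxBr (HPy (e s)).2.1 subr0.
have EV : forall s, AV^T *m ((1%:M - P) *m e s) = AV^T *m e s.
  by move=> s; rewrite E1 mulmxBr (HPy (e s)).2.2 subr0.
have -> : (fun s => q (AC^T *m ((1%:M - P) *m e s)) s) = (fun s => q (AC^T *m e s) s).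
  by apply: funext => s; rewrite EC.
rewrite ER EV !HF !mul_col_mx !mul_row_col !mul0mx !add0r !addr0 !add_col_mx.
rewrite !E1 !E2 !mulmxBr.
congr col_mx; last congr col_mx; last congr col_mx.
- by rewrite (@addrL1 _ _ _ _ _ _ _ (AV *m (QVC *m iV t))).
- by rewrite mulNmx (@addrL2 _ _ _ (AL^T *m (P *m e t))).
- by rewrite addr0.
- by rewrite -mulmxA (@addrL3 _ _ _ (B *m (Al^T *m (P *m e t)))).
Qed.
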